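(* The topology of any first countable topological semigroup $S$ with an open right unit is generated by a single left-subinvariant $\overline{\mathsf{dist}}$-continuous quasi-pseudometric; if moreover $S$ is semiregular, this quasi-pseudometric can additionally be chosen right-continuous.
   Context: A topological semigroup is a topological space with continuous associative multiplication; $e$ is an open right unit if $xe=x$ for all $x$ and $xV$ is a neighborhood of $x$ for every neighborhood $V$ of $e$ and every $x$. Semiregular: every neighborhood $O_x$ of $x$ contains $\mathrm{int}\,\overline{U_x}$ for some neighborhood $U_x$ of $x$. A quasi-pseudometric is $d:S\times S\to[0,\infty)$ with $d(x,x)=0$ and the triangle inequality; left-subinvariant if $d(zx,zy)\le d(x,y)$ for all $x,y,z$; right-continuous if $y\mapsto d(x,y)$ is continuous for each $x$; $\overline{\mathsf{dist}}$-continuous if for every non-empty $A\subset S$ the function $x\mapsto\inf\{\varepsilon>0:x\in\overline{B_d(A,\varepsilon)}\}$ is continuous, where $B_d(A,\varepsilon)=\{y:\exists a\in A\ d(a,y)<\varepsilon\}$. $d$ generates the topology if the balls $B_d(x,\varepsilon)=\{y:d(x,y)<\varepsilon\}$ form a subbase of it. *)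

(* Defs.v *)
From HB Require Import structures.
From mathcomp Require Import all_boot all_order all_algebra.
From mathcomp Require Import all_classical all_reals all_analysis.
Set Implicit Arguments. Unset Strict Implicit. Unset Printing Implicit Defensive.
Import Order.TTheory GRing.Theory Num.Theory.
Import numFieldNormedType.Exports.
Local Open Scope classical_set_scope.
Local Open Scope ring_scope.

Section Defs.
Variable S : topologicalType.

Definition topological_semigroup (mul : S -> S -> S) : Prop :=
  (forall x y z, mul x (mul y z) = mul (mul x y) z) /\
  continuous (fun p : S * S => mul p.1 p.2).

Definition first_countable : Prop :=
  forall x : S, exists B : nat -> set S,
    (forall n, nbhs x (B n)) /\ (forall U, nbhs x U -> exists n, B n `<=` U).

Definition open_right_unit (mul : S -> S -> S) (e : S) : Prop :=
  (forall x, mul x e = x) /\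
  (forall x (V : set S), nbhs e V -> nbhs x [set mul x v | v in V]).

Definition semiregular : Prop :=
  forall (x : S) (O : set S), nbhs x O ->
    exists U : set S, nbhs x U /\ interior (closure U) `<=` O.

Variable R : realType.

Definition quasi_pseudometric (d : S -> S -> R) : Prop :=
  (forall x y, 0 <= d x y) /\ (forall x, d x x = 0) /\
  (forall x y z, d x z <= d x y + d y z).

Definition left_subinvariant (mul : S -> S -> S) (d : S -> S -> R) : Prop :=
  forall x y z, d (mul z x) (mul z y) <= d x y.

Definition qright_continuous (d : S -> S -> R) : Prop :=
  forall x, continuous (d x).

Definition qball (d : S -> S -> R) (x : S) (eps : R) : set S :=
  [set y | d x y < eps].

Definition qball_set (d : S -> S -> R) (A : set S) (eps : R) : set S :=
  [set y | exists2 a, A a & d a y < eps].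

Definition distbar (d : S -> S -> R) (A : set S) (x : S) : R :=
  inf [set eps : R | 0 < eps /\ closure (qball_set d A eps) x].

Definition distbar_continuous (d : S -> S -> R) : Prop :=
  forall A : set S, A !=set0 -> continuous (distbar d A).

(* the balls B_d(x, eps) form a subbase of the topology of S:
   a set is open iff it is a union of finite intersections of balls *)
Definition generates_topology (d : S -> S -> R) : Prop :=
  forall U : set S, open U <->
    (forall x, U x -> exists (n : nat) (c : 'I_n -> S) (r : 'I_n -> R),
       (forall i, qball d (c i) (r i) x) /\
       (forall y, (forall i, qball d (c i) (r i) y) -> U y)).

End Defs.

(* Main.v *)
Require Import Defs.
From HB Require Import structures.
From mathcomp Require Import all_boot all_order all_algebra.
From mathcomp Require Import all_classical all_reals all_analysis.
From mathcomp Require Import ring lra.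
Import Order.TTheory GRing.Theory Num.Theory.
Import numFieldNormedType.Exports.
Local Open Scope classical_set_scope.
Local Open Scope ring_scope.

Section Pf.
Variables (R : realType) (S : topologicalType) (mul : S -> S -> S) (e : S).
Hypothesis Hassoc : forall x y z, mul x (mul y z) = mul (mul x y) z.
Hypothesis Hcont : continuous (fun p : S * S => mul p.1 p.2).
Hypothesis Hunit : forall x, mul x e = x.
Hypothesis Hopen : forall x (V : set S), nbhs e V -> nbhs x [set mul x v | v in V].
Hypothesis Hfc : first_countable S.

Lemma mul_nbhs x y (N : set S) : nbhs (mul x y) N ->
  exists2 P, nbhs x P & exists2 Q, nbhs y Q & forall a b, P a -> Q b -> N (mul a b).
Proof.
move=> hN; have := Hcont (x, y) N hN.
case=> [[P Q]] /= [hP hQ] sub.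
exists P => //; exists Q => // a b Pa Qb; exact: (sub (a, b)).
Qed.

Lemma mulr_nbhs x u (N : set S) : nbhs (mul x u) N -> nbhs x [set w | N (mul w u)].
Proof.
move=> /mul_nbhs [P hP [Q hQ sub]].
apply: filterS hP => w Pw; apply: sub => //; exact: nbhs_singleton.
Qed.

Lemma mull_nbhs z y (N : set S) : nbhs (mul z y) N -> nbhs y [set w | N (mul z w)].
Proof.
move=> /mul_nbhs [P hP [Q hQ sub]].
apply: filterS hQ => w Qw; apply: sub => //; exact: nbhs_singleton.
Qed.

Definition Bs : nat -> set S := projT1 (cid (Hfc e)).
Lemma Bs_nbhs n : nbhs e (Bs n).
Proof. by rewrite /Bs; case: cid => B [h1 h2]. Qed.
Lemma Bs_base U : nbhs e U -> exists n, Bs n `<=` U.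
Proof. by rewrite /Bs; case: cid => B [h1 h2]; apply: h2. Qed.

Lemma ee : mul e e = e. Proof. exact: Hunit. Qed.

Lemma step_ex (X : set S) (n : nat) : nbhs e X -> exists W : set S,
  [/\ nbhs e W, W `<=` X, W `<=` Bs n &
      forall a b c, W a -> W b -> W c -> X (mul a (mul b c))].
Proof.
move=> hX.
have hX' : nbhs (mul e e) X by rewrite ee.
have [P hP [Q hQ sub]] := mul_nbhs _ _ _ hX'.
have hQe : nbhs (mul e e) Q by rewrite ee.
have [P' hP' [Q' hQ' sub']] := mul_nbhs _ _ _ hQe.
exists (X `&` Bs n `&` P `&` P' `&` Q'); split.
- by apply: filterI => //; apply: filterI => //; apply: filterI => //;
    apply: filterI => //; exact: Bs_nbhs.
- by move=> w [[[[]]]].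
- by move=> w [[[[]]]].
- move=> a b c [[[[_ _] Pa] _] _] [[[_ _] P'b] _] [_ Q'c].
  by apply: sub => //; apply: sub'.
Qed.

Definition step_set (X : {X : set S | nbhs e X}) (n : nat) : set S :=
  projT1 (cid (step_ex _ n (proj2_sig X))).

Lemma step_setP (X : {X : set S | nbhs e X}) n :
  let W := step_set X n in
  [/\ nbhs e W, W `<=` proj1_sig X, W `<=` Bs n &
      forall a b c, W a -> W b -> W c -> proj1_sig X (mul a (mul b c))].
Proof. rewrite /step_set; case: cid => W h; exact: h. Qed.

Definition step_sig (X : {X : set S | nbhs e X}) (n : nat) : {X : set S | nbhs e X} :=
  exist _ (step_set X n) (let: And4 h _ _ _ := step_setP X n in h).

Lemma step_sigP (X : {X : set S | nbhs e X}) n :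
  let W := proj1_sig (step_sig X n) in
  [/\ W `<=` proj1_sig X, W `<=` Bs n &
      forall a b c, W a -> W b -> W c -> proj1_sig X (mul a (mul b c))].
Proof. by have [] := step_setP X n. Qed.

Fixpoint Vsig (n : nat) : {X : set S | nbhs e X} :=
  match n with
  | 0 => exist _ setT filterT
  | n'.+1 => step_sig (Vsig n') n'
  end.

Definition V n := proj1_sig (Vsig n).

Lemma V_nbhs n : nbhs e (V n). Proof. exact: proj2_sig. Qed.
Lemma V_e n : V n e. Proof. exact: nbhs_singleton (V_nbhs n). Qed.
Lemma V_S n : V n.+1 `<=` V n. Proof. by have [] := step_sigP (Vsig n) n. Qed.
Lemma V_B n : V n.+1 `<=` Bs n. Proof. by have [] := step_sigP (Vsig n) n. Qed.
Lemma V_triple n a b c : V n.+1 a -> V n.+1 b -> V n.+1 c -> V n (mul a (mul b c)).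
Proof. by have [_ _] := step_sigP (Vsig n) n; apply. Qed.
Lemma V_mono m n : (m <= n)%N -> V n `<=` V m.
Proof.
elim: n => [|n IH]; first by rewrite leqn0 => /eqP ->.
rewrite leq_eqVlt => /orP [/eqP -> //|]; rewrite ltnS => /IH h x /V_S; exact: h.
Qed.
Lemma V_base U : nbhs e U -> exists n, V n `<=` U.
Proof. move=> /Bs_base [n hn]; exists n.+1 => x /V_B; exact: hn. Qed.


Definition h (m : nat) : R := (2 ^+ m)^-1.

Lemma h_gt0 m : 0 < h m.
Proof. by rewrite /h invr_gt0 exprn_gt0. Qed.
Lemma h_ge0 m : 0 <= h m. Proof. exact: ltW (h_gt0 m). Qed.
Lemma h_le1 m : h m <= 1.
Proof. by rewrite /h invf_le1 ?exprn_gt0 // exprn_ege1 // ler1n. Qed.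
Lemma h_S m : h m.+1 + h m.+1 = h m.
Proof. rewrite /h exprS; field; by rewrite expf_neq0 // pnatr_eq0. Qed.
Lemma h_mono m n : (m <= n)%N -> h n <= h m.
Proof.
move=> mn; rewrite /h lef_pV2 ?posrE ?exprn_gt0 //.
by rewrite (ler_eXn2l (_ : 1 < (2:R))) // ltr1n.
Qed.
Lemma h_lt m n : h m < h n -> (n < m)%N.
Proof. by rewrite ltnNge; apply: contraTN => /h_mono; rewrite leNgt. Qed.
Lemma h_small (eps : R) : 0 < eps -> exists n, h n < eps.
Proof.
move=> he; have := near_infty_natSinv_expn_lt (PosNum he).
case=> N _ HN; exists N; have := HN N (leqnn N); by rewrite /h div1r.
Qed.

Definition w (s : option nat) : R := if s is Some m then h m else 1.
Definition weight (L : seq (option nat)) : R := \sum_(s <- L) w s.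

Lemma w_ge0 s : 0 <= w s. Proof. by case: s => [m|] //=; exact: h_ge0. Qed.
Lemma weight_ge0 L : 0 <= weight L.
Proof. by rewrite /weight; apply: sumr_ge0 => s _; exact: w_ge0. Qed.
Lemma weight_cons s L : weight (s :: L) = w s + weight L.
Proof. by rewrite /weight big_cons. Qed.
Lemma weight_cat L1 L2 : weight (L1 ++ L2) = weight L1 + weight L2.
Proof. by rewrite /weight big_cat. Qed.

Definition stepR (x : S) (s : option nat) (z : S) : Prop :=
  if s is Some m then exists2 u, V m u & z = mul x u else True.

Fixpoint reach (x : S) (L : seq (option nat)) (y : S) : Prop :=
  match L with
  | [::] => y = x
  | s :: L' => exists2 z, stepR x s z & reach z L' y
  end.

Lemma reach_cat x y z L1 L2 : reach x L1 y -> reach y L2 z -> reach x (L1 ++ L2) z.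
Proof.
elim: L1 x => [|s L1 IH] x /=; first by move=> ->.
by case=> z' h1 h2 h3; exists z' => //; apply: IH.
Qed.

Lemma reach_split x z L1 L2 : reach x (L1 ++ L2) z -> exists2 y, reach x L1 y & reach y L2 z.
Proof.
elim: L1 x => [|s L1 IH] x /=; first by move=> h; exists x.
case=> z' h1 /IH [y h2 h3]; exists y => //; by exists z'.
Qed.

Lemma reach_left z x y L : reach x L y -> reach (mul z x) L (mul z y).
Proof.
elim: L x => [|s L IH] x /=; first by move=> ->.
case=> z' h1 h2; exists (mul z z'); last exact: IH.
case: s h1 {h2} => [m|] //= [u hu ->]; exists u => //; by rewrite Hassoc.
Qed.

Lemma scan L (t : R) : 0 < t -> t <= weight L ->
  exists L1, exists s, exists L2, [/\ L = L1 ++ s :: L2, weight L1 < t & t <= weight L1 + w s].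
Proof.
elim: L t => [|s L IH] t t0 /=.
  by rewrite /weight big_nil => /(lt_le_trans t0); rewrite ltxx.
rewrite weight_cons => hw.
have [hs|hs] := leP t (w s).
  by exists [::], s, L; rewrite /weight big_nil add0r.
have := IH (t - w s); rewrite subr_gt0 lerBlDl => /(_ hs hw) [L1 [s' [L2 [-> h1 h2]]]].
exists (s :: L1), s', L2; rewrite !weight_cons; split => //.
  by rewrite -ltrBrDl.
by rewrite -addrA -lerBlDl.
Qed.

Lemma split3 L (t : R) : L != [::] -> 0 < t -> weight L < t + t ->
  exists L1, exists s, exists L2,
    [/\ L = L1 ++ s :: L2, weight L1 < t, weight L2 < t & w s <= weight L].
Proof.
move=> hL t0 hw.
suff [L1 [s [L2 [hc h1 h2]]]] : exists L1, exists s, exists L2,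
    [/\ L = L1 ++ s :: L2, weight L1 < t & weight L2 < t].
  exists L1, s, L2; split => //.
  rewrite hc weight_cat weight_cons addrCA ler_wpDr //.
  by apply: addr_ge0; exact: weight_ge0.
have [hge|hlt] := leP t (weight L).
  have [L1 [s [L2 [hc h1 h2]]]] := scan L t t0 hge.
  exists L1, s, L2; split => //.
  move: hw; rewrite hc weight_cat weight_cons => hw.
  have := weight_ge0 L1; have := w_ge0 s; lra.
move: hL hlt; clear hw; case/lastP: L => [|L1 s] // _ hlt.
exists L1, s, [::]; rewrite -cats1; split => //.
  apply: le_lt_trans hlt; rewrite -cats1 weight_cat ler_wpDr //; exact: weight_ge0.
by rewrite /weight big_nil.
Qed.

Lemma key_lemma k : forall L x y n, (size L <= k)%N -> reach x L y -> weight L < h n ->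
  exists2 v, V n v & y = mul x v.
Proof.
elim: k => [|k IH] L x y n.
  rewrite leqn0 => /nilP -> /= -> _; exists e; [exact: V_e | by rewrite Hunit].
case: L => [|s0 L0]; first by move=> _ /= ->; exists e; [exact: V_e | by rewrite Hunit].
move=> hsz hr hw.
have := @split3 (s0 :: L0) (h n.+1) isT (h_gt0 _); rewrite h_S.
move=> /(_ hw) [L1 [s [L2 [hc h1 h2 h3]]]].
move: hr; rewrite hc => /reach_split [y1 r1] /= [y2 r2 r3].
have hsz1 : (size L1 <= k)%N.
  by move: hsz; rewrite hc size_cat /= addnS ltnS => /(leq_trans _); apply; exact: leq_addr.
have hsz2 : (size L2 <= k)%N.
  by move: hsz; rewrite hc size_cat /= addnS ltnS => /(leq_trans _); apply; exact: leq_addl.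
have [v1 hv1 e1] := IH _ _ _ _ hsz1 r1 h1.
have [v2 hv2 e2] := IH _ _ _ _ hsz2 r3 h2.
subst y y1.
case: s r2 h3 {hc} => [m|] /= r2 h3; last first.
  by have := lt_le_trans (le_lt_trans h3 hw) (h_le1 n); rewrite ltxx.
case: r2 => u hu e3; subst y2.
have hm : (n < m)%N by apply: h_lt; exact: le_lt_trans h3 hw.
exists (mul v1 (mul u v2)); first by apply: V_triple => //; exact: (V_mono _ _ hm).
by rewrite !Hassoc.
Qed.


Definition dset x y : set R := [set r | exists2 L, reach x L y & r = weight L].
Definition d x y : R := inf (dset x y).

Lemma dset_n0 x y : dset x y !=set0.
Proof. exists (weight [:: None]), [:: None] => //=; by exists y. Qed.
Lemma dset_lb x y : has_lbound (dset x y).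
Proof. exists 0 => r [L _ ->]; exact: weight_ge0. Qed.
Lemma d_le x y L : reach x L y -> d x y <= weight L.
Proof. move=> hr; apply: (ge_inf (dset_lb x y)); by exists L. Qed.
Lemma d_ge0 x y : 0 <= d x y.
Proof. apply: lb_le_inf; first exact: dset_n0. by move=> r [L _ ->]; exact: weight_ge0. Qed.
Lemma d_lt x y t : d x y < t -> exists2 L, reach x L y & weight L < t.
Proof. by move=> /(inf_lt (dset_n0 x y)) [r [L hL ->] hr]; exists L. Qed.
Lemma d_le1 x y : d x y <= 1.
Proof.
have -> : 1 = weight [:: None] by rewrite weight_cons /weight big_nil addr0.
apply: d_le => /=; by exists y.
Qed.
Lemma d_xx x : d x x = 0.
Proof.
apply/eqP; rewrite eq_le d_ge0 andbT.
have -> : 0 = weight [::] by rewrite /weight big_nil.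
exact: d_le.
Qed.
Lemma d_tri x y z : d x z <= d x y + d y z.
Proof.
apply/ler_addgt0Pr => eps he.
have he2 : 0 < eps / 2 by rewrite divr_gt0.
have [L1 r1 w1] := d_lt x y (d x y + eps / 2) (ltac:(by rewrite ltrDl)).
have [L2 r2 w2] := d_lt y z (d y z + eps / 2) (ltac:(by rewrite ltrDl)).
apply: le_trans (d_le _ _ _ (reach_cat _ _ _ _ _ r1 r2)) _.
rewrite weight_cat; lra.
Qed.
Lemma d_left z x y : d (mul z x) (mul z y) <= d x y.
Proof.
apply: lb_le_inf; first exact: dset_n0.
move=> r [L hr ->]; apply: d_le; exact: reach_left.
Qed.
Lemma d_step n wp u : V n u -> d wp (mul wp u) <= h n.
Proof.
move=> hu.
have -> : h n = weight [:: Some n] by rewrite weight_cons /weight big_nil addr0.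
apply: d_le => /=; exists (mul wp u); last by [].
by exists u.
Qed.
Lemma d_small x y n : d x y < h n -> exists2 v, V n v & y = mul x v.
Proof.
move=> /d_lt [L hr hw]; exact: (key_lemma (size L) L x y n (leqnn _) hr hw).
Qed.


Section Abstract.
Variable D : S -> S -> R.
Hypothesis Dge0 : forall x y, 0 <= D x y.
Hypothesis Dtri : forall x y z, D x z <= D x y + D y z.
Hypothesis Dstep : forall n wp u, V n u -> D wp (mul wp u) <= h n.

Lemma ball_nbhs c r y : qball D c r y -> nbhs y (qball D c r).
Proof.
rewrite /qball /= => hy.
have [n hn] := h_small (r - D c y) (ltac:(by rewrite subr_gt0)).
apply: filterS (Hopen y (V n) (V_nbhs n)) => _ [v hv <-] /=.
have := Dtri c y (mul y v); have := Dstep n y v hv; lra.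
Qed.

Lemma qball_set_mono (A : set S) (r1 r2 : R) : r1 <= r2 -> qball_set D A r1 `<=` qball_set D A r2.
Proof. move=> hr z [a ha hz]; exists a => //; exact: lt_le_trans hz hr. Qed.

Let E (A : set S) (t : S) : set R := [set eps | 0 < eps /\ closure (qball_set D A eps) t].

Lemma E_n0 (A : set S) t : A !=set0 -> E A t !=set0.
Proof.
case=> a ha; exists (D a t + 1); split.
  by have := Dge0 a t; lra.
by apply: subset_closure; exists a => //; rewrite ltrDl.
Qed.

Lemma E_lb A t : has_lbound (E A t).
Proof. by exists 0 => r [hr _]; exact: ltW. Qed.

Lemma distbar_ge0 A t : A !=set0 -> 0 <= distbar D A t.
Proof. move=> hA; apply: lb_le_inf; first exact: E_n0. by move=> r [hr _]; exact: ltW. Qed.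

Lemma distbar_cont A : A !=set0 -> continuous (distbar D A).
Proof.
move=> hA x; apply/cvgrPdist_lt => eps he.
set f := distbar D A.
have he2 : 0 < eps / 2 by rewrite divr_gt0.
have H1 : \forall t \near x, f t < f x + eps.
  have [e0 [e0pos e0cl] e0lt] := inf_lt (E_n0 A x hA) (ltac:(by rewrite ltrDl) : f x < f x + eps / 2).
  have [n hn] := h_small (eps / 2) he2.
  apply: filterS (Hopen x (V n) (V_nbhs n)) => _ [u hu <-].
  apply: (@le_lt_trans _ _ (e0 + h n)); last by lra.
  apply: (ge_inf (E_lb A _)); split; first by have := h_gt0 n; lra.
  move=> N hN; have hM := mulr_nbhs x u N hN.
  have [z [[a ha hda] hz]] := e0cl _ hM.
  exists (mul z u); split => //; exists a => //.
  have := Dtri a z (mul z u); have := Dstep n z u hu; lra.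
have H2 : \forall t \near x, f x - eps < f t.
  have [hc|hc] := ltP 0 (f x - eps / 2); last first.
    by apply: nearW => t; have := distbar_ge0 A t hA; rewrite -/f; lra.
  have ncl : ~ closure (qball_set D A (f x - eps / 2)) x.
    move=> hcl; have : f x <= f x - eps / 2 by apply: (ge_inf (E_lb A x)).
    lra.
  move: ncl; rewrite /closure /= => /existsNP [N] /not_implyP [hN hNe].
  apply: filterS (nbhs_interior hN) => t hNt.
  apply: (@lt_le_trans _ _ (f x - eps / 2)); first by lra.
  apply: lb_le_inf; first exact: E_n0.
  move=> r [rpos rcl]; rewrite leNgt; apply/negP => hr.
  have [z [hz1 hz2]] := rcl N hNt; apply: hNe; exists z; split => //.
  by apply: (qball_set_mono A r) => //; exact: ltW.
apply: filterS2 H1 H2 => t h1 h2; by rewrite ltr_distlC h1 h2.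
Qed.


Lemma distbar_le A t eps : 0 < eps -> closure (qball_set D A eps) t -> distbar D A t <= eps.
Proof. move=> h1 h2; apply: (ge_inf (E_lb A t)); by split. Qed.

Lemma distbar_lb A t c : A !=set0 ->
  (forall eps, 0 < eps -> closure (qball_set D A eps) t -> c <= eps) -> c <= distbar D A t.
Proof. move=> hA hc; apply: lb_le_inf; first exact: E_n0. by move=> r [h1 h2]; apply: hc. Qed.

Lemma distbar_lt A t c : A !=set0 -> distbar D A t < c ->
  exists2 eps, 0 < eps /\ closure (qball_set D A eps) t & eps < c.
Proof. by move=> hA /(inf_lt (E_n0 A t hA)) [r hr hrc]; exists r. Qed.

Lemma gen_top : (forall x, D x x = 0) ->
  (forall x U, nbhs x U -> exists r, 0 < r /\ qball D x r `<=` U) ->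
  generates_topology D.
Proof.
move=> Dxx Hbase U; split.
- rewrite openE => hU x hx.
  have [r [r0 hr]] := Hbase x U (hU x hx).
  exists 1%N, (fun _ => x), (fun _ => r); split.
    by move=> i; rewrite /qball /= Dxx.
  by move=> y hy; apply: hr; exact: (hy ord0).
- move=> hU; rewrite openE => x hx.
  have [n [c [r [h1 h2]]]] := hU x hx.
  have hF : \forall y \near x, forall i, qball D (c i) (r i) y.
    by apply: filter_forall => i; exact: ball_nbhs.
  by apply: filterS hF => y hy; apply: h2.
Qed.

End Abstract.


Lemma d_base x U : nbhs x U -> exists r, 0 < r /\ qball d x r `<=` U.
Proof.
move=> hU; have hU' : nbhs (mul x e) U by rewrite Hunit.
have [n hn] := V_base _ (mull_nbhs x e U hU').
exists (h n); split; first exact: h_gt0.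
by move=> y /d_small [v hv ->]; apply: hn.
Qed.

Theorem part1 : exists D : S -> S -> R,
     [/\ quasi_pseudometric D, left_subinvariant mul D,
         distbar_continuous D & generates_topology D].
Proof.
exists d; split.
- split; [exact: d_ge0 | split; [exact: d_xx | exact: d_tri]].
- by move=> x y z; exact: d_left.
- by move=> A hA; apply: distbar_cont => //; [exact: d_ge0 | exact: d_tri | exact: d_step].
- apply: (gen_top d); first [exact: d_ge0 | exact: d_tri | exact: d_step | exact: d_xx | exact: d_base].
Qed.

Lemma reach_nbhs y L wp : reach y L wp -> weight L < 1 ->
  forall N, nbhs wp N -> nbhs y [set y' | exists2 w', N w' & reach y' L w'].
Proof.
elim: L y => [|s L IH] y /=.
  move=> -> _ N hN; apply: filterS hN => y' hy'; by exists y'.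
move=> [z hs hr]; rewrite weight_cons => hw N hN.
case: s hs hw => [m|] /= hs hw; last by have := weight_ge0 L; lra.
case: hs => u hu hz; subst z.
have hw' : weight L < 1 by have := h_ge0 m; lra.
have hM := IH _ hr hw' N hN.
apply: filterS (mulr_nbhs y u _ hM) => y' [w' hNw hr'].
exists w' => //; exists (mul y' u) => //; by exists u.
Qed.

Definition d' x y := distbar d [set x] y.

Lemma set1_n0 (x : S) : [set x] !=set0. Proof. by exists x. Qed.

Lemma d'_le_d x y : d' x y <= d x y.
Proof.
apply/ler_addgt0Pr => eps he.
apply: distbar_le; first by have := d_ge0 x y; lra.
apply: subset_closure; exists x => //; by rewrite ltrDl.
Qed.

Lemma d'_ge0 x y : 0 <= d' x y.
Proof. apply: distbar_ge0; [exact: d_ge0 | exact: set1_n0]. Qed.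

Lemma d'_xx x : d' x x = 0.
Proof. apply/eqP; rewrite eq_le d'_ge0 andbT -(d_xx x); exact: d'_le_d. Qed.

Lemma d'_step n wp u : V n u -> d' wp (mul wp u) <= h n.
Proof. move=> hu; apply: le_trans (d'_le_d _ _) (d_step _ _ _ hu). Qed.

Lemma d'_tri x y z : d' x z <= d' x y + d' y z.
Proof.
have [hs|hs] := leP 1 (d' x y + d' y z).
  by apply: le_trans (d'_le_d x z) _; apply: le_trans (d_le1 x z) hs.
apply/ler_addgt0Pr => eps he.
set e1 := Order.min (eps / 2) ((1 - (d' x y + d' y z)) / 4).
have e1pos : 0 < e1 by rewrite lt_min divr_gt0 //= divr_gt0 // subr_gt0.
have [e1a e1b] : e1 <= eps / 2 /\ e1 <= (1 - (d' x y + d' y z)) / 4.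
  by have := le_refl e1; rewrite {2}/e1 le_min => /andP [].
have [al [alpos alcl] allt] := distbar_lt d d_ge0 [set x] y (d' x y + e1) (set1_n0 x)
  (ltac:(by rewrite ltrDl)).
have [be [bepos becl] belt] := distbar_lt d d_ge0 [set y] z (d' y z + e1) (set1_n0 y)
  (ltac:(by rewrite ltrDl)).
have hab : al + be < 1 by lra.
apply: (@le_trans _ _ (al + be)); last by lra.
apply: distbar_le; first by lra.
move=> N hN.
have [wp [[a ha hda] hNw]] := becl _ (nbhs_interior hN).
rewrite /= in ha; subst a.
have [L hr hwL] := d_lt y wp be hda.
rewrite /interior /= in hNw.
have hM := reach_nbhs y L wp hr (ltac:(lra)) N hNw.
have [y' [[a' ha' hd'] [w' hNw' hr']]] := alcl _ hM.
rewrite /= in ha'; subst a'.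
exists w'; split => //; exists x => //.
have := d_tri x y' w'; have := d_le y' w' L hr'; lra.
Qed.

Lemma d'_left z x y : d' (mul z x) (mul z y) <= d' x y.
Proof.
apply: (distbar_lb d d_ge0); first exact: set1_n0.
move=> eps hpos hcl; apply: distbar_le; first exact: hpos.
move=> N hN; have hM := mull_nbhs z y N hN.
have [wp [[a ha hda] hMw]] := hcl _ hM.
rewrite /= in ha; subst a.
exists (mul z wp); split => //; exists (mul z x) => //.
exact: le_lt_trans (d_left z x wp) hda.
Qed.

Lemma d'_base x U : semiregular S -> nbhs x U -> exists r, 0 < r /\ qball d' x r `<=` U.
Proof.
move=> Hsr hU; have [W [hW hWU]] := Hsr x U hU.
have hW' : nbhs (mul x e) W by rewrite Hunit.
have [n hn] := V_base _ (mull_nbhs x e W hW').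
exists (h n); split; first exact: h_gt0.
move=> y hy; apply: hWU; rewrite /interior /=.
apply: filterS (ball_nbhs d' d'_tri d'_step x (h n) y hy) => y' hy'.
have [eps [epos ecl] elt] := distbar_lt d d_ge0 [set x] y' (h n) (set1_n0 x) hy'.
have sub : qball_set d [set x] eps `<=` W.
  move=> v [a ha hav]; rewrite /= in ha; subst a.
  have [u hu ->] := d_small x v n (lt_trans hav elt); exact: hn.
exact: closure_subset sub _ ecl.
Qed.

Theorem part2 : semiregular S -> exists D : S -> S -> R,
     [/\ quasi_pseudometric D, left_subinvariant mul D,
         distbar_continuous D, generates_topology D & qright_continuous D].
Proof.
move=> Hsr; exists d'; split.
- split; [exact: d'_ge0 | split; [exact: d'_xx | exact: d'_tri]].
- by move=> x y z; exact: d'_left.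
- by move=> A hA; apply: distbar_cont => //; [exact: d'_ge0 | exact: d'_tri | exact: d'_step].
- apply: (gen_top d'); [exact: d'_tri | exact: d'_step | exact: d'_xx |].
  by move=> x U; exact: d'_base.
- move=> x; apply: distbar_cont; [exact: d_ge0 | exact: d_tri | exact: d_step | exact: set1_n0].
Qed.

End Pf.

Theorem corollary6p3 (R : realType) (S : topologicalType) (mul : S -> S -> S) (e : S) :
  topological_semigroup mul -> first_countable S -> open_right_unit mul e ->
  (exists d : S -> S -> R,
     [/\ quasi_pseudometric d, left_subinvariant mul d,
         distbar_continuous d & generates_topology d]) /\
  (semiregular S ->
   exists d : S -> S -> R,
     [/\ quasi_pseudometric d, left_subinvariant mul d,
         distbar_continuous d, generates_topology d & qright_continuous d]).
Proof.
move=> [Hassoc Hcont] Hfc [Hunit Hopen]; split.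
- exact: (part1 R S mul e Hassoc Hcont Hunit Hopen Hfc).
- exact: (part2 R S mul e Hassoc Hcont Hunit Hopen Hfc).
Qed.
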